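(* Consider the linear system $$\frac{d\boldsymbol{x}(t)}{dt} = \mathbf{A}\boldsymbol{x}(t) + \mathbf{B}_p\boldsymbol{p}(t) + \mathbf{B}_d\boldsymbol{d}(t),\qquad t\in\mathcal{T}=[0,t_f],$$ with $\boldsymbol{x}\in\mathbb{R}^{N_x}$, $\boldsymbol{p}\in\mathbb{R}^{N_p}_{+}$, where $\mathbf{A}$ has non-positive diagonal and non-negative off-diagonal entries and $\mathbf{B}_p\ge 0$ entrywise, with a given disturbance $\boldsymbol{d}$ and initial state $\boldsymbol{x}_0$. Fix bounds $\boldsymbol{0}\le\boldsymbol{p}_{\min}\le\boldsymbol{p}_{\max}$ and $\boldsymbol{x}_{\min}\le\boldsymbol{x}_{\max}$ (componentwise). For $t\in\mathcal{T}$ define matrices $\boldsymbol{\alpha}(t),\boldsymbol{\beta}(t)\in\mathbb{R}^{N_x\times N_p}$ by $$\alpha_{i,j}(t)=\max_{0\le\tau\le t}\big(e^{\mathbf{A}(t-\tau)}\mathbf{B}_p\big)_{i,j},\qquad \beta_{i,j}(t)=\min_{0\le\tau\le t}\big(e^{\mathbf{A}(t-\tau)}\mathbf{B}_p\big)_{i,j}.$$ Let $\boldsymbol{p}_+$ and $\boldsymbol{p}_-$ be feasible power trajectories (satisfying $\boldsymbol{p}_{\min}\le\boldsymbol{p}_\pm(t)\le\boldsymbol{p}_{\max}$ and, with the same $\boldsymbol{x}_0$ and $\boldsymbol{d}$, states satisfying $\boldsymbol{x}_{\min}\le\boldsymbol{x}_\pm(t)\le\boldsymbol{x}_{\max}$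 for all $t$), and set $$\boldsymbol{b}_{\pm}(t)=\int_0^t e^{\mathbf{A}(t-\tau)}\mathbf{B}_p\,\boldsymbol{p}_\pm(\tau)\,d\tau.$$ Let $\boldsymbol{p}_a$ satisfy $\boldsymbol{p}_{\min}\le\boldsymbol{p}_a(t)\le\boldsymbol{p}_{\max}$ for all $t$ and, for all $t\in\mathcal{T}$, $$\boldsymbol{\alpha}(t)\int_0^t\boldsymbol{p}_a(\tau)\,d\tau\le\boldsymbol{b}_+(t),\qquad \boldsymbol{\beta}(t)\int_0^t\boldsymbol{p}_a(\tau)\,d\tau\ge\boldsymbol{b}_-(t)$$ (componentwise). Then the state $\boldsymbol{x}_a$ produced by $\boldsymbol{p}_a$ (same $\boldsymbol{x}_0$, $\boldsymbol{d}$) satisfies $\boldsymbol{x}_{\min}\le\boldsymbol{x}_a(t)\le\boldsymbol{x}_{\max}$ for all $t\in\mathcal{T}$.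
   Context: Integrals of vectors are componentwise; vector inequalities are componentwise. States are given by $\boldsymbol{x}(t)=e^{\mathbf{A}t}\boldsymbol{x}_0+\int_0^t e^{\mathbf{A}(t-\tau)}(\mathbf{B}_d\boldsymbol{d}(\tau)+\mathbf{B}_p\boldsymbol{p}(\tau))\,d\tau$. A matrix with non-negative off-diagonal entries is called Metzler. *)

(* Defs.v *)
From HB Require Import structures.
From mathcomp Require Import all_boot all_order all_algebra.
From mathcomp Require Import all_classical all_reals all_analysis.
Set Implicit Arguments. Unset Strict Implicit. Unset Printing Implicit Defensive.
Import Order.TTheory GRing.Theory Num.Theory numFieldNormedType.Exports.
Local Open Scope classical_set_scope.
Local Open Scope ring_scope.

Definition expm (R : realType) (n : nat) (A : 'M[R]_n) (t : R) : 'M[R]_n :=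
  \matrix_(i, j) lim ((fun N : nat =>
      ((\sum_(k < N) ((t ^+ k / (k`!)%:R) *: A ^+ k)) i j : R)) @ \oo).

Definition mxle (R : realType) (m n : nat) (M N : 'M[R]_(m, n)) : Prop :=
  forall i j, M i j <= N i j.

Definition metzler (R : realType) (n : nat) (A : 'M[R]_n) : Prop :=
  forall i j, i != j -> 0 <= A i j.

Definition vint (R : realType) (n : nat) (a b : R) (f : R -> 'cV[R]_n)
  : 'cV[R]_n :=
  \col_i Rintegral (@lebesgue_measure R) `[a, b] (fun s => f s i 0).

Definition state (R : realType) (Nx Np Nd : nat) (A : 'M[R]_Nx)
  (Bd : 'M[R]_(Nx, Nd)) (Bp : 'M[R]_(Nx, Np)) (x0 : 'cV[R]_Nx)
  (d : R -> 'cV[R]_Nd) (p : R -> 'cV[R]_Np) (t : R) : 'cV[R]_Nx :=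
  expm A t *m x0 + vint 0 t (fun s => expm A (t - s) *m (Bd *m d s + Bp *m p s)).

Definition alpha (R : realType) (Nx Np : nat) (A : 'M[R]_Nx)
  (Bp : 'M[R]_(Nx, Np)) (t : R) : 'M[R]_(Nx, Np) :=
  \matrix_(i, j) sup [set (expm A (t - s) *m Bp) i j | s in `[0, t]].

Definition beta (R : realType) (Nx Np : nat) (A : 'M[R]_Nx)
  (Bp : 'M[R]_(Nx, Np)) (t : R) : 'M[R]_(Nx, Np) :=
  \matrix_(i, j) inf [set (expm A (t - s) *m Bp) i j | s in `[0, t]].

(* Main.v *)
Require Import Defs.
From HB Require Import structures.
From mathcomp Require Import all_boot all_order all_algebra.
From mathcomp Require Import all_classical all_reals all_analysis.
Import Order.TTheory GRing.Theory Num.Theory numFieldNormedType.Exports.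
Local Open Scope classical_set_scope.
Local Open Scope ring_scope.
Set Implicit Arguments.

Section Expm.
Context (R : realType) (n : nat) (A : 'M[R]_n).

Definition mA : R := \sum_i \sum_j `|A i j|.

Lemma mA_ge0 : 0 <= mA.
Proof. by apply: sumr_ge0 => i _; apply: sumr_ge0. Qed.

Lemma col_le j : \sum_l `|A l j| <= mA.
Proof.
rewrite /mA; apply: ler_sum => l _.
by rewrite (bigD1 j) //= lerDl sumr_ge0.
Qed.

Lemma powA_bound k i j : `|(A ^+ k) i j| <= mA ^+ k.
Proof.
elim: k i j => [|k IH] i j.
  rewrite expr0 !mxE; case: (i == j) => /=; by rewrite ?normr1 ?normr0.
rewrite exprSr -mulmxE mxE exprSr.
apply: (le_trans (ler_norm_sum _ _ _)).
apply: (@le_trans _ _ (\sum_l mA ^+ k * `|A l j|)).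
  apply: ler_sum => l _; rewrite normrM ler_wpM2r //.
by rewrite -mulr_sumr ler_wpM2l ?exprn_ge0 ?mA_ge0 ?col_le.
Qed.

Definition cf (u : R) i j (k : nat) : R := u ^+ k / (k`!)%:R * (A ^+ k) i j.

Lemma psumE u i j N :
  (\sum_(k < N) ((u ^+ k / (k`!)%:R) *: A ^+ k)) i j = series (cf u i j) N.
Proof.
rewrite /series /= summxE big_mkord; apply: eq_bigr => k _; by rewrite mxE.
Qed.

Lemma cf_le u i j k : `|cf u i j k| <= exp_coeff (`|u| * mA) k.
Proof.
rewrite /cf /exp_coeff /= normrM normrM exprMn normrX normfV normr_nat.
rewrite [X in _ <= X]mulrAC ler_wpM2l ?powA_bound //.
Qed.

Lemma cf_cvg u i j : cvgn (series (cf u i j)).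
Proof.
apply: normed_cvg.
apply: (@series_le_cvg _ _ (exp_coeff (`|u| * mA))) => //.
- move=> k; exact: normr_ge0.
- move=> k; apply: exp_coeff_ge0; by rewrite mulr_ge0 ?mA_ge0.
- move=> k; exact: cf_le.
- exact: is_cvg_series_exp_coeff.
Qed.

Lemma expmE u i j : expm A u i j = limn (series (cf u i j)).
Proof.
rewrite /expm mxE; have -> : (fun N : nat => (\sum_(k < N) ((u ^+ k / (k`!)%:R) *: A ^+ k)) i j) = series (cf u i j) by apply: funext => N; exact: psumE.
by [].
Qed.

Lemma expm_cvg u i j : series (cf u i j) @ \oo --> expm A u i j.
Proof. rewrite expmE; exact: cf_cvg. Qed.

Lemma expm_bound T u i j : `|u| <= T ->
  `|expm A u i j| <= limn (series (exp_coeff (T * mA))).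
Proof.
move=> uT; rewrite expmE.
have cn : cvgn [normed series (cf u i j)].
  apply: (@series_le_cvg _ _ (exp_coeff (`|u| * mA))) => //.
  - move=> k; exact: normr_ge0.
  - move=> k; apply: exp_coeff_ge0; by rewrite mulr_ge0 ?mA_ge0.
  - move=> k; exact: cf_le.
  - exact: is_cvg_series_exp_coeff.
apply: (le_trans (lim_series_norm cn)).
apply: ler_lim => //; first exact: is_cvg_series_exp_coeff.
near=> N; rewrite /series /=; apply: ler_sum => k _.
apply: (le_trans (cf_le _ _ _ _)).
rewrite /exp_coeff /= ler_wpM2r ?invr_ge0 ?ler0n // lerXn2r ?nnegrE ?mulr_ge0 ?mA_ge0 //.
  exact: (le_trans (normr_ge0 _) uT).
by rewrite ler_wpM2r ?mA_ge0.
Unshelve. all: by end_near. Qed.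


Lemma expm_meas (D : set R) (f : R -> R) i j : measurable_fun D f ->
  measurable_fun D (fun s => expm A (f s) i j).
Proof.
move=> mf.
apply: (@measurable_realfun.measurable_fun_cvg _ _ _ _ (fun N s => series (cf (f s) i j) N)).
  move=> N; rewrite /series /=; apply: measurable_sum => k.
  rewrite /cf; apply: measurable_realfun.measurable_funM => //.
  apply: measurable_realfun.measurable_funM => //; exact: measurable_realfun.measurable_funX.
move=> x _; exact: expm_cvg.
Qed.

End Expm.

Section BM.
Context (R : realType) (t : R).
Local Notation mu := (@lebesgue_measure R).
Local Notation D := (`[0, t]%classic : set R).

Lemma mD : measurable D.
Proof. exact: measurable_itv. Qed.

Lemma mDL : measurable (D : set (measurableTypeR R)).
Proof. exact: measurable_itv. Qed.

Definition BM (f : R -> R) :=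
  measurable_fun D f /\ exists C, forall s, D s -> `|f s| <= C.

Lemma BM_bounded f : BM f -> [bounded f x | x in D].
Proof.
move=> [_ [C HC]]; exists C; split; first exact: num_real.
move=> M CM x Dx; apply: (le_trans (HC x Dx)); exact: ltW.
Qed.

Lemma int_cst1 : mu.-integrable D (EFin \o cst 1).
Proof.
apply/integrableP; split; first exact/measurable_realfun.measurable_EFinP/measurable_cst.
have -> : (fun x : R => `|(EFin \o cst 1%R) x|%E) = cst (1%E : \bar R).
  by apply: funext => x /=; rewrite normr1.
rewrite integral_cst ?mD // mul1e; have := @lebesgue_measure_itv R `[0, t]; rewrite /= => ->.
by case: ifP => _; rewrite ?ltry.
Qed.

Lemma int_mulBM h g : BM h -> mu.-integrable D (EFin \o g) ->
  mu.-integrable D (EFin \o (fun s => h s * g s)).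
Proof.
move=> Bh ig; have [mh _] := Bh.
have mh' : measurable_fun (T := measurableTypeR R) (U := R) D h := mh.
have := integrableMr mDL mh' (BM_bounded Bh) ig.
by apply: eq_integrable => // x _ /=; rewrite EFinM.
Qed.

Lemma BM_int f : BM f -> mu.-integrable D (EFin \o f).
Proof.
move=> Bf; have := int_mulBM Bf int_cst1.
by apply: eq_integrable => // x _ /=; rewrite mulr1.
Qed.

Lemma int_sum (I : Type) (r : seq I) (F : I -> R -> R) :
  (forall l, mu.-integrable D (EFin \o F l)) ->
  mu.-integrable D (EFin \o (fun s => \sum_(l <- r) F l s)).
Proof.
move=> iF; have := @integrable_sum _ _ _ mu D mD I r xpredT (fun l s => (F l s)%:E) (fun l _ => iF l).
by apply: eq_integrable => // x _ /=; rewrite sumEFin.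
Qed.

Lemma Rint_sum (I : Type) (r : seq I) (F : I -> R -> R) :
  (forall l, mu.-integrable D (EFin \o F l)) ->
  Rintegral mu D (fun s => \sum_(l <- r) F l s) = \sum_(l <- r) Rintegral mu D (F l).
Proof.
move=> iF; elim: r => [|a r IH].
  rewrite big_nil; under eq_Rintegral do rewrite big_nil.
  by rewrite Rintegral_cst ?mD // mul0r.
rewrite big_cons; under eq_Rintegral do rewrite big_cons.
rewrite RintegralD ?mD ?IH //; exact: int_sum.
Qed.

Lemma BM_cst c : BM (cst c).
Proof. split; first exact: measurable_cst. by exists `|c|. Qed.

Lemma BM_add f g : BM f -> BM g -> BM (fun s => f s + g s).
Proof.
move=> [mf [C1 H1]] [mg [C2 H2]]; split; first exact: measurable_realfun.measurable_funD.
exists (C1 + C2) => s Ds; apply: (le_trans (ler_normD _ _)); apply: lerD; [exact: H1|exact: H2].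
Qed.

Lemma BM_mul f g : BM f -> BM g -> BM (fun s => f s * g s).
Proof.
move=> [mf [C1 H1]] [mg [C2 H2]]; split; first exact: measurable_realfun.measurable_funM.
exists (`|C1| * `|C2|) => s Ds; rewrite normrM.
apply: ler_pM => //; [exact: le_trans (H1 s Ds) (ler_norm _)|exact: le_trans (H2 s Ds) (ler_norm _)].
Qed.

Lemma BM_sum (I : Type) (r : seq I) (F : I -> R -> R) :
  (forall l, BM (F l)) -> BM (fun s => \sum_(l <- r) F l s).
Proof.
move=> BF; elim: r => [|a r IH].
  have -> : (fun s => \sum_(l <- [::]) F l s) = cst 0 by apply: funext => s; rewrite big_nil.
  exact: BM_cst.
have -> : (fun s => \sum_(l <- a :: r) F l s) = (fun s => F a s + \sum_(l <- r) F l s).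
  by apply: funext => s; rewrite big_cons.
exact: BM_add.
Qed.

End BM.

Section Main.
Context (R : realType) (Nx Np Nd : nat) (A : 'M[R]_Nx) (Bp : 'M[R]_(Nx, Np))
  (Bd : 'M[R]_(Nx, Nd)) (x0 : 'cV[R]_Nx) (d : R -> 'cV[R]_Nd) (t : R).
Hypothesis t0 : 0 <= t.
Local Notation mu := (@lebesgue_measure R).
Local Notation D := (`[0, t]%classic : set R).
Local Notation E := (fun s => expm A (t - s)).

Lemma Dle s : D s -> 0 <= s <= t.
Proof. by rewrite /= in_itv. Qed.

Lemma BM_E i k : @BM R t (fun s => E s i k).
Proof.
split.
  apply: expm_meas; apply: measurable_realfun.measurable_funB => //.
exists (limn (series (exp_coeff (t * @mA R Nx A)))) => s /Dle /andP[s0 st].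
apply: expm_bound; rewrite ger0_norm ?subr_ge0 //.
by rewrite lerBlDr lerDl.
Qed.

Lemma BM_EB m (B : 'M[R]_(Nx, m)) i j : @BM R t (fun s => (E s *m B) i j).
Proof.
have -> : (fun s => (E s *m B) i j) = (fun s => \sum_(k <- index_enum 'I_Nx) E s i k * B k j).
  by apply: funext => s; rewrite mxE.
apply: BM_sum => k; apply: BM_mul; [exact: BM_E | exact: BM_cst].
Qed.


Lemma vintE n a b (F : R -> 'cV[R]_n) i j :
  (vint a b F) i j = Rintegral mu (`[a, b]%classic : set R) (fun s => F s i 0).
Proof. by rewrite /vint mxE. Qed.

Lemma BM_g (p : R -> 'cV[R]_Np) i : (forall j, @BM R t (fun s => p s j 0)) ->
  @BM R t (fun s => (E s *m Bp *m p s) i 0).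
Proof.
move=> Bp_.
have -> : (fun s => (E s *m Bp *m p s) i 0) =
   (fun s => \sum_(j <- index_enum 'I_Np) (E s *m Bp) i j * p s j 0).
  by apply: funext => s; rewrite [LHS]mxE.
apply: BM_sum => j; apply: BM_mul; [exact: BM_EB | exact: Bp_].
Qed.

Hypothesis hd : forall l, mu.-integrable D (EFin \o (fun s => d s l 0)).

Lemma int_f i : mu.-integrable D (EFin \o (fun s => (E s *m (Bd *m d s)) i 0)).
Proof.
have -> : (fun s => (E s *m (Bd *m d s)) i 0) =
  (fun s => \sum_(k <- index_enum 'I_Nx) E s i k *
            \sum_(l <- index_enum 'I_Nd) Bd k l * d s l 0).
  by apply: funext => s; rewrite [LHS]mxE; apply: eq_bigr => k _; rewrite [X in _ * X]mxE.
apply: int_sum => k; apply: int_mulBM; first exact: BM_E.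
apply: int_sum => l; apply: int_mulBM; [exact: BM_cst | exact: hd].
Qed.

Lemma state_split (p : R -> 'cV[R]_Np) i : (forall j, @BM R t (fun s => p s j 0)) ->
  state A Bd Bp x0 d p t i 0 = (expm A t *m x0) i 0 +
    Rintegral mu D (fun s => (E s *m (Bd *m d s)) i 0) +
    Rintegral mu D (fun s => (E s *m Bp *m p s) i 0).
Proof.
move=> Bp_.
rewrite /state -addrA; rewrite [LHS]mxE; congr (_ + _).
rewrite vintE -RintegralD; first last.
- by apply: BM_int; apply: BM_g.
- exact: int_f.
- exact: mDL.
apply: eq_Rintegral => s _.
by rewrite mulmxDr !mulmxA [LHS]mxE.
Qed.


Lemma Rint_lin (c : 'I_Np -> R) (F : 'I_Np -> R -> R) :
  (forall j, mu.-integrable D (EFin \o F j)) ->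
  \sum_j c j * Rintegral mu D (F j) = Rintegral mu D (fun s => \sum_j c j * F j s).
Proof.
move=> iF; rewrite Rint_sum; last first.
  by move=> j; apply: int_mulBM; [exact: BM_cst | exact: iF].
by apply: eq_bigr => j _; rewrite RintegralZl //; exact: mDL.
Qed.

Lemma upper (p q : R -> 'cV[R]_Np) i :
  (forall j, @BM R t (fun s => p s j 0)) ->
  (forall s j, D s -> 0 <= p s j 0) ->
  (alpha A Bp t *m vint 0 t p) i 0 <= (vint 0 t (fun s => E s *m Bp *m q s)) i 0 ->
  Rintegral mu D (fun s => (E s *m Bp *m p s) i 0) <=
  Rintegral mu D (fun s => (E s *m Bp *m q s) i 0).
Proof.
move=> Bp_ p0 H; rewrite vintE in H; apply: (le_trans _ H); rewrite [X in _ <= X]mxE.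
rewrite (eq_bigr (fun j => alpha A Bp t i j * Rintegral mu D (fun s => p s j 0))); last first.
  by move=> j _; rewrite vintE.
rewrite Rint_lin; last by move=> j; apply: BM_int.
apply: le_Rintegral; first exact: mDL.
- apply: BM_int; exact: BM_g.
- apply: BM_int; apply: BM_sum => j; apply: BM_mul; [exact: BM_cst|exact: Bp_].
move=> s Ds; rewrite [X in X <= _]mxE; apply: ler_sum => j _.
apply: ler_wpM2r; first exact: p0.
rewrite /alpha [X in _ <= X]mxE; apply: ub_le_sup; last by exists s => //; rewrite mxE.
have [_ [C HC]] := BM_EB Bp i j.
exists C => _ [s' Ds' <-]; exact: le_trans (ler_norm _) (HC s' Ds').
Qed.

Lemma lower (p q : R -> 'cV[R]_Np) i :
  (forall j, @BM R t (fun s => p s j 0)) ->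
  (forall s j, D s -> 0 <= p s j 0) ->
  (vint 0 t (fun s => E s *m Bp *m q s)) i 0 <= (beta A Bp t *m vint 0 t p) i 0 ->
  Rintegral mu D (fun s => (E s *m Bp *m q s) i 0) <=
  Rintegral mu D (fun s => (E s *m Bp *m p s) i 0).
Proof.
move=> Bp_ p0 H; rewrite vintE in H; apply: (le_trans H); rewrite [X in X <= _]mxE.
rewrite (eq_bigr (fun j => beta A Bp t i j * Rintegral mu D (fun s => p s j 0))); last first.
  by move=> j _; rewrite vintE.
rewrite Rint_lin; last by move=> j; apply: BM_int.
apply: le_Rintegral; first exact: mDL.
- apply: BM_int; apply: BM_sum => j; apply: BM_mul; [exact: BM_cst|exact: Bp_].
- apply: BM_int; exact: BM_g.
move=> s Ds; rewrite [X in _ <= X]mxE; apply: ler_sum => j _.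
apply: ler_wpM2r; first exact: p0.
rewrite /beta [X in X <= _]mxE; apply: ge_inf; last by exists s => //; rewrite mxE.
have [_ [C HC]] := BM_EB Bp i j.
exists (- C) => _ [s' Ds' <-]; have := HC s' Ds'; rewrite ler_norml => /andP[].
by [].
Qed.

End Main.
Unset Implicit Arguments.

Theorem theorem2 (R : realType) (Nx Np Nd : nat) (tf : R)
  (A : 'M[R]_Nx) (Bp : 'M[R]_(Nx, Np)) (Bd : 'M[R]_(Nx, Nd))
  (x0 : 'cV[R]_Nx) (d : R -> 'cV[R]_Nd)
  (pmin pmax : 'cV[R]_Np) (xmin xmax : 'cV[R]_Nx)
  (pplus pminus pa : R -> 'cV[R]_Np) :
  0 <= tf ->
  (forall i, A i i <= 0) -> metzler A ->
  (forall i j, 0 <= Bp i j) ->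
  (* regularity of the data: measurable inputs, integrable disturbance *)
  (forall k, measurable_fun `[0, tf] (fun s => d s k 0)) ->
  (forall k, (@lebesgue_measure R).-integrable `[0, tf]
               (fun s => (d s k 0)%:E)) ->
  (forall k, measurable_fun `[0, tf] (fun s => pplus s k 0)) ->
  (forall k, measurable_fun `[0, tf] (fun s => pminus s k 0)) ->
  (forall k, measurable_fun `[0, tf] (fun s => pa s k 0)) ->
  (* bounds *)
  mxle 0 pmin -> mxle pmin pmax -> mxle xmin xmax ->
  (* p_+ and p_- are feasible *)
  (forall t, t \in `[0, tf] ->
     mxle pmin (pplus t) /\ mxle (pplus t) pmax /\
     mxle xmin (state A Bd Bp x0 d pplus t) /\
     mxle (state A Bd Bp x0 d pplus t) xmax) ->
  (forall t, t \in `[0, tf] ->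
     mxle pmin (pminus t) /\ mxle (pminus t) pmax /\
     mxle xmin (state A Bd Bp x0 d pminus t) /\
     mxle (state A Bd Bp x0 d pminus t) xmax) ->
  (* p_a *)
  (forall t, t \in `[0, tf] -> mxle pmin (pa t) /\ mxle (pa t) pmax) ->
  (forall t, t \in `[0, tf] ->
     mxle (alpha A Bp t *m vint 0 t pa)
          (vint 0 t (fun s => expm A (t - s) *m Bp *m pplus s)) /\
     mxle (vint 0 t (fun s => expm A (t - s) *m Bp *m pminus s))
          (beta A Bp t *m vint 0 t pa)) ->
  forall t, t \in `[0, tf] ->
    mxle xmin (state A Bd Bp x0 d pa t) /\
    mxle (state A Bd Bp x0 d pa t) xmax.
Proof.
move=> tf0 Adiag Ametz Bp0 md id mpp mpm mpa hpmin hpmm hx Hp Hm Ha Hab t tin.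
have /andP[t0 ttf] : (0 <= t) && (t <= tf) by move: tin; rewrite in_itv.
have sub : (`[0, t]%classic : set R) `<=` `[0, tf]%classic.
  move=> s /=; rewrite !in_itv /= => /andP[s0 st]; rewrite s0 /=; exact: le_trans st ttf.
have hd : forall l, (@lebesgue_measure R).-integrable (`[0, t]%classic : set R)
    (EFin \o (fun s => d s l 0)).
  by move=> l; exact: (integrableS (@mDL R tf) (@mDL R t) sub (id l)).
have pmin0 : forall j, 0 <= pmin j 0 by move=> j; have := hpmin j 0; rewrite mxE.
have BMgen : forall p : R -> 'cV[R]_Np,
    (forall s, s \in `[0, tf] -> mxle pmin (p s) /\ mxle (p s) pmax) ->
    (forall k, measurable_fun `[0, tf] (fun s => p s k 0)) ->
    (forall j, BM R t (fun s => p s j 0)) /\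
    (forall s j, (`[0, t]%classic : set R) s -> 0 <= p s j 0).
  move=> p hp mp; split.
  - move=> j; split; first exact: measurable_funS (measurable_itv _) sub (mp j).
    exists (pmax j 0) => s /sub Ds; have [h1 h2] := hp s Ds.
    by rewrite ger0_norm; [exact: h2 | exact: le_trans (pmin0 j) (h1 j 0)].
  - move=> s j /sub Ds; have [h1 _] := hp s Ds; exact: le_trans (pmin0 j) (h1 j 0).
have [Bpa pa0] := BMgen pa Ha mpa.
have [Bpp _] : (forall j, BM R t (fun s => pplus s j 0)) /\
    (forall s j, (`[0, t]%classic : set R) s -> 0 <= pplus s j 0).
  apply: BMgen mpp => s hs; have [h1 [h2 _]] := Hp s hs; by split.
have [Bpm _] : (forall j, BM R t (fun s => pminus s j 0)) /\
    (forall s j, (`[0, t]%classic : set R) s -> 0 <= pminus s j 0).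
  apply: BMgen mpm => s hs; have [h1 [h2 _]] := Hm s hs; by split.
have [Hup Hlo] := Hab t tin.
have [_ [_ [Hpl Hpu]]] := Hp t tin; have [_ [_ [Hml Hmu]]] := Hm t tin.
split => i j; rewrite (ord1 j).
- apply: le_trans (Hml i 0) _.
  rewrite (state_split A Bp Bd x0 d hd pminus i Bpm) (state_split A Bp Bd x0 d hd pa i Bpa).
  rewrite lerD2l; apply: lower; [exact: Bpa|exact: pa0|exact: Hlo i 0].
- apply: le_trans _ (Hpu i 0).
  rewrite (state_split A Bp Bd x0 d hd pplus i Bpp) (state_split A Bp Bd x0 d hd pa i Bpa).
  rewrite lerD2l; apply: upper; [exact: Bpa|exact: pa0|exact: Hup i 0].
Qed.
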